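(* Let $A,B$ be nonzero finite-dimensional $K$-subspaces of $L$. Then there exist nonzero finite-dimensional $K$-subspaces $E,F$ of $L$ such that: (1) $\langle EF\rangle\subset\langle AB\rangle$; (2) $\dim_KE+\dim_KF\geq\dim_KA+\dim_KB$; (3) $ED=E$ and $DF=F$, where $D=E_*^{-1}E\cap FF_*^{-1}$.
   Context: $K$ is a commutative field and $L$ is a (possibly noncommutative) division ring containing $K$ in its center. For $S\subset L$, $\langle S\rangle$ denotes the $K$-subspace of $L$ spanned by $S$. For subsets $S_1,S_2,\dots$ of $L$, $S_1S_2=\{s_1s_2\mid s_1\in S_1,s_2\in S_2\}$ (product set), and similarly for more factors. For $X\subset L$, $X_*=X\setminus\{0\}$ and $X_*^{-1}=\{x^{-1}\mid x\in X_*\}$. *)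

(* Defs.v *)
From HB Require Import structures.
From mathcomp Require Import all_boot all_order all_algebra.
Set Implicit Arguments. Unset Strict Implicit. Unset Printing Implicit Defensive.
Import GRing.Theory.
Local Open Scope ring_scope.

(* L : unitAlgType K is an algebra over the field K (scalars commute with
   everything, i.e. K lies in the center); the division-ring property is an
   explicit hypothesis of the theorem. *)

Section Defs.
Variables (K : fieldType) (L : unitAlgType K).

Definition kspan (S : L -> Prop) : L -> Prop :=
  fun x => exists (n : nat) (c : 'I_n -> K) (v : 'I_n -> L),
    (forall i, S (v i)) /\ x = \sum_(i < n) c i *: v i.

Definition kfree (n : nat) (v : 'I_n -> L) : Prop :=
  forall c : 'I_n -> K, \sum_(i < n) c i *: v i = 0 -> forall i, c i = 0.

Definition has_kdim (V : L -> Prop) (n : nat) : Prop :=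
  exists v : 'I_n -> L, kfree v /\
    (forall x, V x <-> kspan (fun y => exists i, y = v i) x).

Definition prodset (S T : L -> Prop) : L -> Prop :=
  fun x => exists s t, S s /\ T t /\ x = s * t.

Definition invl_prod (X : L -> Prop) : L -> Prop :=
  fun x => exists a b, X a /\ a != 0 /\ X b /\ x = a^-1 * b.

Definition prod_invr (X : L -> Prop) : L -> Prop :=
  fun x => exists a b, X a /\ X b /\ b != 0 /\ x = a * b^-1.

End Defs.

(* Main.v *)
Require Import Defs.
From HB Require Import structures.
From mathcomp Require Import all_boot all_order all_algebra.
From Stdlib Require Import ClassicalEpsilon Classical Lia.
Set Implicit Arguments. Unset Strict Implicit. Unset Printing Implicit Defensive.
Import GRing.Theory.
Local Open Scope ring_scope.

Section Lin.
Variables (K : fieldType) (L : unitAlgType K).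

Definition spanF n (v : 'I_n -> L) (x : L) :=
  exists c : 'I_n -> K, x = \sum_(i < n) c i *: v i.

Lemma spanF0 n (v : 'I_n -> L) : spanF v 0.
Proof. exists (fun _ => 0); by rewrite big1 // => i _; rewrite scale0r. Qed.

Lemma spanFD n (v : 'I_n -> L) x y : spanF v x -> spanF v y -> spanF v (x + y).
Proof.
move=> [c ->] [d ->]; exists (fun i => c i + d i).
by rewrite -big_split /=; apply: eq_bigr => i _; rewrite scalerDl.
Qed.

Lemma spanFZ n (v : 'I_n -> L) a x : spanF v x -> spanF v (a *: x).
Proof.
move=> [c ->]; exists (fun i => a * c i).
by rewrite scaler_sumr; apply: eq_bigr => i _; rewrite scalerA.
Qed.

Lemma spanF_gen n (v : 'I_n -> L) i : spanF v (v i).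
Proof.
exists (fun j => (j == i)%:R); rewrite (bigD1 i) //= eqxx scale1r big1 ?addr0 //.
by move=> j /negbTE ->; rewrite scale0r.
Qed.

Lemma spanF_sum n (v : 'I_n -> L) m (c : 'I_m -> K) (u : 'I_m -> L) :
  (forall j, spanF v (u j)) -> spanF v (\sum_(j < m) c j *: u j).
Proof.
move=> H; apply: (big_ind (spanF v)); [exact: spanF0|exact: spanFD|].
by move=> j _; apply: spanFZ.
Qed.

Lemma kspan_spanF n (v : 'I_n -> L) x :
  kspan (fun y => exists i, y = v i) x <-> spanF v x.
Proof.
split.
  move=> [k [c [u [Hu ->]]]]; apply: spanF_sum => j.
  by have [i ->] := Hu j; apply: spanF_gen.
by move=> [c ->]; exists n, c, v; split=> // i; exists i.
Qed.

Lemma kspan_sub (S : L -> Prop) x : S x -> kspan S x.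
Proof.
move=> Sx; exists 1%N, (fun _ => 1), (fun _ => x); split=> //.
by rewrite big_ord1 scale1r.
Qed.

Lemma kspan0 (S : L -> Prop) : kspan S 0.
Proof.
exists 0%N, (fun _ => 0), (fun _ => 0); split=> [[]//|]; by rewrite big_ord0.
Qed.

Lemma kspanD (S : L -> Prop) x y : kspan S x -> kspan S y -> kspan S (x + y).
Proof.
move=> [n1 [c1 [v1 [H1 ->]]]] [n2 [c2 [v2 [H2 ->]]]].
exists (n1 + n2)%N, (fun i => match split i with inl j => c1 j | inr j => c2 j end),
  (fun i => match split i with inl j => v1 j | inr j => v2 j end); split.
  by move=> i; case: (split i).
rewrite big_split_ord /=; congr (_ + _); apply: eq_bigr => i _.
  by rewrite (unsplitK (inl i)).
by rewrite (unsplitK (inr i)).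
Qed.

Lemma kspanZ (S : L -> Prop) a x : kspan S x -> kspan S (a *: x).
Proof.
move=> [n [c [v [H ->]]]]; exists n, (fun i => a * c i), v; split=> //.
by rewrite scaler_sumr; apply: eq_bigr => i _; rewrite scalerA.
Qed.

Lemma kspan_mono (S T : L -> Prop) x :
  (forall y, S y -> kspan T y) -> kspan S x -> kspan T x.
Proof.
move=> H [n [c [v [Hv ->]]]].
apply: (big_ind (kspan T)); [exact: kspan0|exact: kspanD|].
by move=> i _; apply/kspanZ/H.
Qed.


Definition phi m (w : 'I_m -> L) (r : 'rV[K]_m) : L := \sum_(j < m) r 0 j *: w j.

Lemma phiD m (w : 'I_m -> L) r s : phi w (r + s) = phi w r + phi w s.
Proof. by rewrite /phi -big_split; apply: eq_bigr => j _; rewrite mxE scalerDl. Qed.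

Lemma phiZ m (w : 'I_m -> L) a r : phi w (a *: r) = a *: phi w r.
Proof. by rewrite /phi scaler_sumr; apply: eq_bigr => j _; rewrite mxE scalerA. Qed.

Lemma phi0 m (w : 'I_m -> L) : phi w 0 = 0.
Proof. by rewrite /phi big1 // => j _; rewrite mxE scale0r. Qed.

Lemma phi_mul m (w : 'I_m -> L) k (a : 'rV_k) (M : 'M_(k, m)) :
  phi w (a *m M) = \sum_(i < k) a 0 i *: phi w (row i M).
Proof.
rewrite /phi; under eq_bigr do rewrite mxE scaler_suml.
rewrite exchange_big /=; apply: eq_bigr => i _; rewrite scaler_sumr.
by apply: eq_bigr => j _; rewrite mxE scalerA.
Qed.

Lemma phi_inj m (w : 'I_m -> L) : kfree w -> forall r s, phi w r = phi w s -> r = s.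
Proof.
move=> hw r s E; apply/eqP; rewrite -subr_eq0; apply/eqP/rowP => j.
have H0 : phi w (r - s) = 0 by rewrite phiD -scaleN1r phiZ E scaleN1r subrr.
by rewrite (hw _ H0 j) mxE.
Qed.

Lemma spanF_phi m (w : 'I_m -> L) x : spanF w x -> exists r, x = phi w r.
Proof.
by move=> [c ->]; exists (\row_j c j); apply: eq_bigr => j _; rewrite mxE.
Qed.

Lemma phi_spanF m (w : 'I_m -> L) r : spanF w (phi w r).
Proof. by exists (fun j => r 0 j). Qed.

Definition Pm m (w : 'I_m -> L) k (M : 'M[K]_(k, m)) (x : L) :=
  exists r, (r <= M)%MS /\ x = phi w r.

Lemma Pm_iff m (w : 'I_m -> L) k (M : 'M[K]_(k, m)) x :
  Pm w M x <-> exists a, x = phi w (a *m M).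
Proof.
split; first by move=> [r [/submxP [a ->] ->]]; exists a.
by move=> [a ->]; exists (a *m M); rewrite submxMl.
Qed.

Lemma Pm_eq m (w : 'I_m -> L) k1 k2 (M1 : 'M[K]_(k1, m)) (M2 : 'M[K]_(k2, m)) :
  (M1 :=: M2)%MS -> forall x, Pm w M1 x <-> Pm w M2 x.
Proof.
move=> E x; split=> [[r [H ->]]|[r [H ->]]]; exists r; split=> //.
  by rewrite -E. by rewrite E.
Qed.

Lemma has_kdim_Pm m (w : 'I_m -> L) (hw : kfree w) k (M : 'M[K]_(k, m)) :
  has_kdim (Pm w M) (\rank M).
Proof.
set B := row_base M.
exists (fun i => phi w (row i B)); split.
  move=> c Hc i.
  have H0 : phi w ((\row_j c j) *m B) = phi w 0.
    by rewrite phi0 phi_mul -[RHS]Hc; apply: eq_bigr => j _; rewrite mxE.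
  have H1 : (\row_j c j) *m B = 0 *m B.
    by rewrite mul0mx; exact: phi_inj hw _ _ H0.
  have := row_free_inj (row_base_free M) H1.
  by move/rowP => /(_ i); rewrite !mxE.
move=> x; rewrite kspan_spanF -(Pm_eq _ (eq_row_base M)) Pm_iff; split.
  move=> [a ->]; rewrite phi_mul; by exists (fun i => a 0 i).
move=> [c ->]; exists (\row_j c j); rewrite phi_mul.
by apply: eq_bigr => j _; rewrite mxE.
Qed.


Lemma choice_fun (A B : Type) (P : A -> B -> Prop) :
  (forall a, exists b, P a b) -> exists f : A -> B, forall a, P a (f a).
Proof.
move=> H; exists (fun a => proj1_sig (constructive_indefinite_description _ (H a))).
by move=> a; case: (constructive_indefinite_description _ (H a)).
Qed.

Lemma spanF_sub n (v : 'I_n -> L) k (u : 'I_k -> L) x :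
  (forall j, spanF v (u j)) -> spanF u x -> spanF v x.
Proof. by move=> H [c ->]; apply: spanF_sum. Qed.

Lemma spanF_recr n (v : 'I_n.+1 -> L) x :
  spanF v x <-> exists y c, spanF (fun j : 'I_n => v (widen_ord (leqnSn n) j)) y /\
                           x = y + c *: v ord_max.
Proof.
split.
  move=> [c ->]; rewrite big_ord_recr /=.
  by exists (\sum_(i < n) c (widen_ord (leqnSn n) i) *: v (widen_ord (leqnSn n) i)),
    (c ord_max); split=> //; exists (fun i => c (widen_ord (leqnSn n) i)).
move=> [y [c [Hy ->]]]; apply: spanFD; last by apply/spanFZ/spanF_gen.
by apply: spanF_sub Hy => j; apply: spanF_gen.
Qed.

Lemma spanF_ext n (v v' : 'I_n -> L) x : (forall i, v i = v' i) -> spanF v x -> spanF v' x.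
Proof. by move=> E; apply: spanF_sub => j; rewrite (E j); apply: spanF_gen. Qed.

Lemma extract k (u : 'I_k -> L) : exists m (w : 'I_m -> L),
  (m <= k)%N /\ kfree w /\ (forall x, spanF u x <-> spanF w x).
Proof.
elim: k u => [|k IH] u.
  exists 0%N, u; split=> //; split=> //; by move=> c _ [].
pose u' := fun j : 'I_k => u (widen_ord (leqnSn k) j).
have [m [w [Hm [hw Hsp]]]] := IH u'.
pose x0 := u ord_max.
have Hu : forall x, spanF u x <-> exists y c, spanF w y /\ x = y + c *: x0.
  move=> x; rewrite spanF_recr; split=> [[y [c [Hy ->]]]|[y [c [Hy ->]]]];
    by exists y, c; split=> //; apply/Hsp.
case: (classic (spanF w x0)) => Hx0.
  exists m, w; split; first exact: leqW.
  split=> // x; rewrite Hu; split.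
    by move=> [y [c [Hy ->]]]; apply/spanFD/spanFZ.
  by move=> Hx; exists x, 0; rewrite scale0r addr0.
pose w' := fun i : 'I_m.+1 => if insub (val i) is Some j then w j else x0.
have w'w : forall j : 'I_m, w' (widen_ord (leqnSn m) j) = w j.
  by move=> j; rewrite /w' /= valK.
have w'm : w' ord_max = x0 by rewrite /w' insubF //= ltnn.
exists m.+1, w'; split=> //; split.
  move=> c; rewrite big_ord_recr /= w'm.
  under eq_bigr do rewrite w'w.
  move=> Hc.
  have cm : c ord_max = 0.
    case: (eqVneq (c ord_max) 0) => // cn; exfalso; apply: Hx0.
    have -> : x0 = (c ord_max)^-1 *: - \sum_(i < m) c (widen_ord (leqnSn m) i) *: w i.
      move/eqP: (Hc); rewrite addrC addr_eq0 => /eqP <-.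
      by rewrite scalerA mulVf // scale1r.
    by apply/spanFZ; rewrite -scaleN1r; apply/spanFZ/spanF_sum/spanF_gen.
  rewrite cm scale0r addr0 in Hc.
  move=> i; case: (ltnP i m) => Hi.
    have -> : i = widen_ord (leqnSn m) (Ordinal Hi) by apply: val_inj.
    exact: (hw _ Hc).
  have -> : i = ord_max by apply: val_inj; apply/eqP; rewrite eqn_leq Hi -ltnS ltn_ord.
  exact: cm.
move=> x; rewrite Hu spanF_recr; split.
  move=> [y [c [Hy ->]]]; exists y, c; rewrite w'm; split=> //.
  by apply: spanF_ext Hy => j; rewrite w'w.
move=> [y [c [Hy ->]]]; exists y, c; rewrite w'm; split=> //.
by apply: spanF_ext Hy => j; rewrite w'w.
Qed.

Lemma row_mkmx m n (f : 'I_n -> 'rV[K]_m) i : row i (\matrix_(i, j) f i 0 j) = f i.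
Proof. by apply/rowP => j; rewrite !mxE. Qed.

Lemma coords m (w : 'I_m -> L) n (v : 'I_n -> L) :
  (forall i, spanF w (v i)) ->
  exists M : 'M[K]_(n, m), forall i, phi w (row i M) = v i.
Proof.
move=> H; have [f Hf] := choice_fun (fun i => spanF_phi (H i)).
by exists (\matrix_(i, j) f i 0 j) => i; rewrite row_mkmx.
Qed.

Lemma free_rank m (w : 'I_m -> L) n (v : 'I_n -> L) (M : 'M[K]_(n, m)) :
  kfree v -> (forall i, phi w (row i M) = v i) -> \rank M = n.
Proof.
move=> hv HM; apply/eqP; apply: inj_row_free => a Ha; apply/rowP => i.
have H0 : \sum_(i < n) a 0 i *: v i = 0.
  by rewrite -[RHS](phi0 w) -Ha phi_mul; apply: eq_bigr => j _; rewrite HM.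
by rewrite mxE (hv _ H0 i).
Qed.

Lemma steinitz n (v : 'I_n -> L) k (u : 'I_k -> L) :
  kfree v -> (forall i, spanF u (v i)) -> (n <= k)%N.
Proof.
move=> hv Hv; have [m [w [Hm [hw Hsp]]]] := extract u.
have [M HM] : exists M : 'M[K]_(n, m), forall i, phi w (row i M) = v i.
  by apply: coords => i; apply/Hsp.
by rewrite -(free_rank hv HM); apply: leq_trans (rank_leq_col M) Hm.
Qed.


Definition lin (T : L -> L) := forall a x y, T (a *: x + y) = a *: T x + T y.

Lemma lin0 T : lin T -> T 0 = 0.
Proof.
move=> hT; have H := hT 1 0 0; rewrite !scale1r addr0 in H.
by apply: (addrI (T 0)); rewrite addr0 -H.
Qed.

Lemma linD T : lin T -> forall x y, T (x + y) = T x + T y.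
Proof. by move=> hT x y; rewrite -{1}(scale1r x) hT scale1r. Qed.

Lemma linZ T : lin T -> forall a x, T (a *: x) = a *: T x.
Proof. by move=> hT a x; rewrite -(addr0 (a *: x)) hT lin0 // addr0. Qed.

Lemma lin_sum T : lin T -> forall n (c : 'I_n -> K) (v : 'I_n -> L),
  T (\sum_(i < n) c i *: v i) = \sum_(i < n) c i *: T (v i).
Proof.
move=> hT n c v; rewrite (big_morph T (linD hT) (lin0 hT)).
by apply: eq_bigr => i _; rewrite linZ.
Qed.

Lemma has_kdim_ext (V V' : L -> Prop) n :
  has_kdim V n -> (forall x, V x <-> V' x) -> has_kdim V' n.
Proof. by move=> [v [hv Hv]] E; exists v; split=> // x; rewrite -E. Qed.

Lemma has_kdim_spanF (V : L -> Prop) n :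
  has_kdim V n -> exists v : 'I_n -> L, kfree v /\ forall x, V x <-> spanF v x.
Proof. by move=> [v [hv Hv]]; exists v; split=> // x; rewrite Hv kspan_spanF. Qed.

Lemma transport (V : L -> Prop) n (T Ti : L -> L) :
  lin T -> lin Ti -> cancel T Ti -> cancel Ti T ->
  has_kdim V n -> has_kdim (fun y => V (T y)) n.
Proof.
move=> hT hTi TK TiK /has_kdim_spanF [v [hv Hv]].
exists (fun i => Ti (v i)); split.
  move=> c Hc; apply: hv.
  have -> : \sum_(i < n) c i *: v i = T (\sum_(i < n) c i *: Ti (v i)).
    by rewrite lin_sum //; apply: eq_bigr => i _; rewrite TiK.
  by rewrite Hc lin0.
move=> x; rewrite kspan_spanF Hv; split.
  move=> [c Hc]; exists c; by rewrite -(lin_sum hTi) -Hc TK.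
by move=> [c ->]; exists c; rewrite lin_sum //; apply: eq_bigr => i _; rewrite TiK.
Qed.

Lemma spanF_Pm m (w : 'I_m -> L) n (v : 'I_n -> L) (M : 'M[K]_(n, m)) :
  (forall i, phi w (row i M) = v i) -> forall x, spanF v x <-> Pm w M x.
Proof.
move=> HM x; rewrite Pm_iff; split.
  move=> [c ->]; exists (\row_i c i); rewrite phi_mul.
  by apply: eq_bigr => i _; rewrite mxE HM.
move=> [a ->]; exists (fun i => a 0 i); rewrite phi_mul.
by apply: eq_bigr => i _; rewrite HM.
Qed.

Lemma GL (U : L -> Prop) p (T Ti : L -> L) :
  lin T -> lin Ti -> cancel T Ti -> cancel Ti T -> has_kdim U p ->
  exists p1 p2,
    has_kdim (fun x => exists y z, U y /\ U z /\ x = y + T z) p1 /\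
    has_kdim (fun y => U y /\ U (T y)) p2 /\ (p1 + p2 = p + p)%N /\ (p <= p1)%N /\
    (p1 = p -> forall y, U y -> U (T y)).
Proof.
move=> hT hTi TK TiK /has_kdim_spanF [e [he HU]].
pose u := fun i : 'I_(p + p) => match split i with inl j => e j | inr j => T (e j) end.
have [m [w [_ [hw Hsp]]]] := extract u.
have [ME HME] : exists M : 'M[K]_(p, m), forall i, phi w (row i M) = e i.
  apply: coords => i; apply/Hsp.
  have -> : e i = u (lshift p i) by rewrite /u (unsplitK (inl i)).
  exact: spanF_gen.
have [MT HMT] : exists M : 'M[K]_(p, m), forall i, phi w (row i M) = T (e i).
  apply: coords => i; apply/Hsp.
  have -> : T (e i) = u (rshift p i) by rewrite /u (unsplitK (inr i)).
  exact: spanF_gen.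
have rE : \rank ME = p by apply: free_rank he HME.
have rT : \rank MT = p.
  apply: free_rank HMT => c Hc; apply: he.
  by rewrite -(TK (\sum_i _)) lin_sum // Hc lin0.
have UP : forall x, U x <-> Pm w ME x by move=> x; rewrite HU; apply: spanF_Pm.
have Tphi : forall a, T (phi w (a *m ME)) = phi w (a *m MT).
  move=> a; rewrite !phi_mul lin_sum //; apply: eq_bigr => i _; by rewrite HME HMT.
have TUP : forall x, U (Ti x) <-> Pm w MT x.
  move=> x; rewrite UP !Pm_iff; split.
    by move=> [a Ha]; exists a; rewrite -Tphi -Ha TiK.
  by move=> [a ->]; exists a; rewrite -Tphi TK.
exists (\rank (ME + MT))%MS, (\rank (ME :&: MT))%MS; split.
  apply: (has_kdim_ext (has_kdim_Pm hw _)) => x; split.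
    move=> [r [/sub_addsmxP [[a b] /= ->] ->]].
    exists (phi w (a *m ME)), (phi w (b *m ME)); rewrite !UP !Pm_iff Tphi phiD.
    by split; [exists a|split; [exists b|]].
  move=> [y [z [/UP /Pm_iff [a ->] [/UP /Pm_iff [b ->] ->]]]].
  exists (a *m ME + b *m MT); rewrite Tphi phiD; split=> //.
  by apply: addmx_sub_adds; apply: submxMl.
split.
  have H2 : has_kdim (fun x => U (Ti x) /\ U x) (\rank (ME :&: MT))%MS.
    apply: (has_kdim_ext (has_kdim_Pm hw _)) => x; rewrite TUP UP; split.
      move=> [r [Hr ->]]; split; exists r; split=> //.
        exact: submx_trans Hr (capmxSr _ _).
      exact: submx_trans Hr (capmxSl _ _).
    move=> [[r1 [H1 E1]] [r2 [H2 E2]]].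
    have Er : r1 = r2 by apply: (phi_inj hw); rewrite -E1 -E2.
    by exists r1; split=> //; rewrite sub_capmx H1 andbT Er H2.
  apply: (has_kdim_ext (transport hT hTi TK TiK H2)) => y.
  by rewrite TK; split=> [[]|[]].
split; first by rewrite mxrank_sum_cap rE rT.
have [le_p eq_p] := mxrank_leqif_sup (addsmxSl ME MT).
split; first by move: le_p; rewrite rE.
move=> Ep y /UP /Pm_iff [a ->]; apply/UP.
have : (ME + MT <= ME)%MS by rewrite -eq_p Ep rE.
rewrite addsmx_sub => /andP [_ sT].
rewrite Tphi; exists (a *m MT); split=> //.
exact: submx_trans (submxMl _ _) sT.
Qed.


Lemma sum_delta n (v : 'I_n -> L) i : \sum_(j < n) (j == i)%:R *: v j = v i.
Proof.
rewrite (bigD1 i) //= eqxx scale1r big1 ?addr0 //.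
by move=> j /negbTE ->; rewrite scale0r.
Qed.

Lemma hk0 (V : L -> Prop) n : has_kdim V n -> V 0.
Proof. by move/has_kdim_spanF => [v [_ H]]; apply/H/spanF0. Qed.

Lemma hkD (V : L -> Prop) n : has_kdim V n -> forall x y, V x -> V y -> V (x + y).
Proof. by move/has_kdim_spanF => [v [_ H]] x y /H Hx /H Hy; apply/H/spanFD. Qed.

Lemma hkZ (V : L -> Prop) n : has_kdim V n -> forall a x, V x -> V (a *: x).
Proof. by move/has_kdim_spanF => [v [_ H]] a x /H Hx; apply/H/spanFZ. Qed.

Lemma hk_pos (V : L -> Prop) n x : has_kdim V n -> V x -> x != 0 -> (0 < n)%N.
Proof.
case: n => // /has_kdim_spanF [v [_ H]] /H [c ->].
by rewrite big_ord0 eqxx.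
Qed.

Lemma hk_elt (V : L -> Prop) n : has_kdim V n -> (0 < n)%N -> exists a, V a /\ a != 0.
Proof.
move=> /has_kdim_spanF [v [hv H]] n0; exists (v (Ordinal n0)); split.
  by apply/H/spanF_gen.
apply/eqP => E.
have := hv (fun j => (j == Ordinal n0)%:R); rewrite sum_delta E => /(_ erefl (Ordinal n0)).
by rewrite eqxx => /eqP; rewrite oner_eq0.
Qed.

Lemma kspan_spanF_mono (S : L -> Prop) n (v : 'I_n -> L) x :
  (forall y, S y -> spanF v y) -> kspan S x -> spanF v x.
Proof. by move=> H [k [c [u [Hu ->]]]]; apply: spanF_sum => j; apply: H. Qed.

Lemma prod_span (A B : L -> Prop) nA nB (a : 'I_nA -> L) (b : 'I_nB -> L) :
  (forall x, A x <-> spanF a x) -> (forall x, B x <-> spanF b x) ->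
  forall x, kspan (prodset A B) x ->
    spanF (fun k : 'I_#|{: 'I_nA * 'I_nB}| => a (enum_val k).1 * b (enum_val k).2) x.
Proof.
move=> HA HB x; apply: kspan_spanF_mono => y [s [t [/HA [al ->] [/HB [be ->] ->]]]].
rewrite mulr_suml; under eq_bigr do rewrite -scalerAl; apply: spanF_sum => i.
rewrite mulr_sumr; under eq_bigr do rewrite -scalerAr.
apply: spanF_sum => j.
have -> : a i * b j = (fun k : 'I_#|{: 'I_nA * 'I_nB}| => a (enum_val k).1 * b (enum_val k).2)
                          (enum_rank (i, j)) by rewrite /= enum_rankK.
exact: spanF_gen.
Qed.

Hypothesis hdiv : forall x : L, x != 0 -> x \is a GRing.unit.

Lemma dim_bound (E F : L -> Prop) p q N (u : 'I_N -> L) :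
  has_kdim E p -> has_kdim F q -> (0 < p)%N -> (0 < q)%N ->
  (forall x, kspan (prodset E F) x -> spanF u x) -> (p <= N)%N /\ (q <= N)%N.
Proof.
move=> hE hF p0 q0 H.
have [e0 [Ee0 e0n]] := hk_elt hE p0; have [f0 [Ff0 f0n]] := hk_elt hF q0.
have /has_kdim_spanF [e [he HE]] := hE; have /has_kdim_spanF [f [hf HF]] := hF.
split.
  apply: (@steinitz _ (fun i => e i * f0) _ u).
    move=> c Hc; apply: he.
    rewrite -(mulrK (hdiv f0n) (\sum_i _)) mulr_suml.
    under eq_bigr do rewrite -scalerAl.
    by rewrite Hc mul0r.
  move=> i; apply/H/kspan_sub; exists (e i), f0.
  by split; [apply/HE/spanF_gen|].
apply: (@steinitz _ (fun i => e0 * f i) _ u).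
  move=> c Hc; apply: hf.
  rewrite -(mulKr (hdiv e0n) (\sum_i _)) mulr_sumr.
  under eq_bigr do rewrite -scalerAr.
  by rewrite Hc mulr0.
move=> i; apply/H/kspan_sub; exists e0, (f i).
by split=> //; split=> //; apply/HF/spanF_gen.
Qed.


Definition Valid (A B E F : L -> Prop) nA nB p q :=
  (0 < p)%N /\ (0 < q)%N /\ has_kdim E p /\ has_kdim F q /\
  (forall x, kspan (prodset E F) x -> kspan (prodset A B) x) /\ (nA + nB <= p + q)%N.

Definition Good (E F : L -> Prop) :=
  let D := fun x => invl_prod E x /\ prod_invr F x in
  (forall x, prodset E D x <-> E x) /\ (forall x, prodset D F x <-> F x).

Lemma good_of (E F : L -> Prop) p q :
  has_kdim E p -> has_kdim F q -> (0 < p)%N -> (0 < q)%N ->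
  (forall d, invl_prod E d -> prod_invr F d -> d != 0 ->
     (forall y, E y -> E (y * d)) /\ (forall y, F y -> F (d * y))) -> Good E F.
Proof.
move=> hE hF p0 q0 H D.
have [a [Ea an]] := hk_elt hE p0; have [g [Fg gn]] := hk_elt hF q0.
have D1 : D 1.
  split; first by exists a, a; rewrite mulVr ?hdiv.
  by exists g, g; rewrite divrr ?hdiv.
split=> x; split.
- move=> [s [t [Es [[Dt1 Dt2] ->]]]].
  case: (eqVneq t 0) => [->|tn]; first by rewrite mulr0; apply: hk0 hE.
  by apply: (H t Dt1 Dt2 tn).1.
- by move=> Ex; exists x, 1; rewrite mulr1.
- move=> [s [t [[Ds1 Ds2] [Ft ->]]]].
  case: (eqVneq s 0) => [->|sn]; first by rewrite mul0r; apply: hk0 hF.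
  by apply: (H s Ds1 Ds2 sn).2.
- by move=> Fx; exists 1, x; rewrite mul1r.
Qed.

Lemma step (A B E F : L -> Prop) nA nB p q :
  Valid A B E F nA nB p q ->
  Good E F \/ exists E' F' p' q', Valid A B E' F' nA nB p' q' /\
    ((p + q < p' + q')%N \/ (p' + q' = p + q /\ q' < q)%N).
Proof.
move=> [p0 [q0 [hE [hF [Hinc Hs]]]]].
case: (classic (forall d, invl_prod E d -> prod_invr F d -> d != 0 ->
     (forall y, E y -> E (y * d)) /\ (forall y, F y -> F (d * y)))) => Hall.
  by left; apply: good_of hE hF p0 q0 Hall.
right.
have [d [Dd1 [Dd2 [dn Hnot]]]] : exists d, invl_prod E d /\ prod_invr F d /\ d != 0 /\
   ~ ((forall y, E y -> E (y * d)) /\ (forall y, F y -> F (d * y))).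
  apply: NNPP => C; apply: Hall => d D1 D2 dn; apply: NNPP => C2.
  by apply: C; exists d.
have du := hdiv dn.
have [a [b [Ea [an [Eb Ed]]]]] := Dd1.
have [c [g [Fc [Fg [gn Fd]]]]] := Dd2.
have Ead : E (a * d) by rewrite Ed mulVKr ?hdiv.
have Fdg : F (d * g) by rewrite Fd mulrVK ?hdiv.
have l1 : lin (fun y => y * d) by move=> k x y; rewrite mulrDl scalerAl.
have l2 : lin (fun y => y * d^-1) by move=> k x y; rewrite mulrDl scalerAl.
have l3 : lin (fun y => d * y) by move=> k x y; rewrite mulrDr scalerAr.
have l4 : lin (fun y => d^-1 * y) by move=> k x y; rewrite mulrDr scalerAr.
have [p1 [p2 [h1 [h2 [e12 [le1 inv1]]]]]] :=
  @GL E p (fun y => y * d) (fun y => y * d^-1) l1 l2 (mulrK du) (mulrVK du) hE.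
have [r1 [r2 [k1 [k2 [f12 [lf1 invf1]]]]]] :=
  @GL F q (fun y => d * y) (fun y => d^-1 * y) l3 l4 (mulKr du) (mulVKr du) hF.
have p2pos : (0 < p2)%N by apply: (hk_pos h2 (conj Ea Ead) an).
have r2pos : (0 < r2)%N by apply: (hk_pos k2 (conj Fg Fdg) gn).
have EF y z : E y -> F z -> kspan (prodset A B) (y * z).
  by move=> Ey Fz; apply/Hinc/kspan_sub; exists y, z.
case: (leqP (p + q) (p1 + r2)) => Hc.
  exists (fun x => exists y z, E y /\ E z /\ x = y + z * d),
         (fun y => F y /\ F (d * y)), p1, r2; split.
    split; first exact: leq_trans p0 le1.
    split=> //; split=> //; split=> //; split; last exact: leq_trans Hs Hc.
    move=> x; apply: kspan_mono => w [s [t [[y [z [Ey [Ez ->]]]] [[Ft Fdt] ->]]]].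
    by rewrite mulrDl -mulrA; apply: kspanD; apply: EF.
  move: Hc; rewrite leq_eqVlt => /orP [/eqP Hc|Hc]; last by left.
  right; split=> //.
  case: (ltnP r2 q) => // Hr; exfalso; apply: Hnot; split.
    apply: inv1; move/leP: Hr => Hr; move/leP: lf1 => lf1; move: Hc e12 f12.
    rewrite -?plusE => Hc e12 f12; lia.
  apply: invf1; move/leP: Hr => Hr; move/leP: lf1 => lf1; move: Hc e12 f12.
  rewrite -?plusE => Hc e12 f12; lia.
exists (fun y => E y /\ E (y * d)),
       (fun x => exists y z, F y /\ F z /\ x = y + d * z), p2, r1; split.
  split=> //; split; first exact: leq_trans q0 lf1.
  split=> //; split=> //; split.
    move=> x; apply: kspan_mono => w [s [t [[Es Esd] [[y [z [Fy [Fz ->]]]] ->]]]].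
    by rewrite mulrDr mulrA; apply: kspanD; apply: EF.
  move/ltP: Hc => Hc; apply/leP; move/leP: Hs => Hs.
  rewrite -?plusE in Hc Hs e12 f12 *; lia.
left; move/ltP: Hc => Hc; apply/ltP.
rewrite -?plusE in Hc e12 f12 *; lia.
Qed.

End Lin.

Theorem mainTheorem4 (K : fieldType) (L : unitAlgType K)
  (hdiv : forall x : L, x != 0 -> x \is a GRing.unit)
  (A B : L -> Prop) (nA nB : nat) :
  (0 < nA)%N -> (0 < nB)%N -> has_kdim A nA -> has_kdim B nB ->
  exists (E F : L -> Prop) (nE nF : nat),
    (0 < nE)%N /\ (0 < nF)%N /\ has_kdim E nE /\ has_kdim F nF /\
    (* (1) <EF> is contained in <AB> *)
    (forall x, kspan (prodset E F) x -> kspan (prodset A B) x) /\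
    (* (2) *)
    (nA + nB <= nE + nF)%N /\
    (* (3) with D = E_*^{-1} E \cap F F_*^{-1} *)
    (let D := fun x => invl_prod E x /\ prod_invr F x in
     (forall x, prodset E D x <-> E x) /\ (forall x, prodset D F x <-> F x)).
Proof.
move=> nA0 nB0 hA hB.
have /has_kdim_spanF [a [_ HA]] := hA; have /has_kdim_spanF [b [_ HB]] := hB.
set N := #|{: 'I_nA * 'I_nB}|.
have Hbound : forall E F p q, Valid A B E F nA nB p q -> (p <= N)%N /\ (q <= N)%N.
  move=> E F p q [p0 [q0 [hE [hF [Hinc _]]]]].
  apply: (dim_bound hdiv hE hF p0 q0) => x /Hinc; exact: prod_span HA HB x.
have main : forall t q E F p, Valid A B E F nA nB p q ->
    (2 * N - (p + q) <= t)%N ->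
    exists E F nE nF, Valid A B E F nA nB nE nF /\ Good E F.
  elim=> [|t IHt] q; elim/ltn_ind: q => q IHq E F p HV Ht;
    case: (step hdiv HV) => [G|[E' [F' [p' [q' [HV' [Hlt|[Heq Hq]]]]]]]];
    try by exists E, F, p, q.
  - exfalso; have [b1 b2] := Hbound _ _ _ _ HV'.
    move/leP: b1 => b1; move/leP: b2 => b2; move/leP: Ht => Ht; move/ltP: Hlt => Hlt.
    rewrite -?plusE -?minusE -?multE in b1 b2 Ht Hlt; lia.
  - by apply: (IHq q' Hq E' F' p' HV'); rewrite Heq.
  - apply: (IHt q' E' F' p' HV').
    move/leP: Ht => Ht; move/ltP: Hlt => Hlt; apply/leP.
    rewrite -?plusE -?minusE -?multE in Ht Hlt *; lia.
  - by apply: (IHq q' Hq E' F' p' HV'); rewrite Heq.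
have V0 : Valid A B A B nA nB nA nB.
  do 4 (split=> //); split=> //.
have [E [F [nE [nF [[p0 [q0 [hE [hF [Hinc Hs]]]]] G]]]]] := main _ nB A B nA V0 (leqnn _).
by exists E, F, nE, nF.
Qed.
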